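(* Let $(X,d)$ be a $\delta$-Gromov hyperbolic space, $p\in X$, $\epsilon>0$, and $X^\epsilon=(X,d_\epsilon)$ the uniformized space. If the Gehring-Hayman property for metric boundary points holds for $X^\epsilon$, then the Gehring-Hayman property for Gromov sequences holds for $X^\epsilon$.
   Context: Gromov product $(x|y)_p=\frac12(d(p,x)+d(p,y)-d(x,y))$. $\delta$-Gromov hyperbolic: unbounded, proper, geodesic, and $(x|z)_p\ge\min\{(x|y)_p,(y|z)_p\}-\delta$ for all $x,y,z,p$. Uniformized metric: $d_\epsilon(x,y)=\inf_\gamma\int_\gamma e^{-\epsilon d(p,z)}ds(z)$ over $d$-rectifiable curves from $x$ to $y$; $l_{d_\epsilon}$ is length with respect to $d_\epsilon$; $\partial_{d_\epsilon}X^\epsilon=\overline{X^\epsilon}\setminus X^\epsilon$ (closure in the completion); $[x,y]$ denotes a $d$-geodesic. A Gromov sequence is $(x_n)$ with $(x_n|x_m)_p\to\infty$ as $n,m\to\infty$. GH property for Gromov sequences: for each Gromov sequence $(x_n)$ there is $C\ge1$ with $l_{d_\epsilon}([x_n,x_m])\le Cd_\epsilon(x_n,x_m)$ for all $n,m$. GH property for metric boundary points: for every $x\in\partial_{d_\epsilon}X^\epsilon$ and every $(x_n)\subseteq X$ with $d_\epsilon(x_n,x)\to0$ there is $C\ge1$ with $l_{d_\epsilon}([x_n,x_m])\le Cd_\epsilon(x_n,x_m)$ for all $n,m$. *)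

(* Defs.v *)
From Stdlib Require Import Reals Lra List.
From Coquelicot Require Import Coquelicot.
Open Scope R_scope.

Section Defs.
Context {X : Type}.

Definition is_metric (d : X -> X -> R) : Prop :=
  (forall x y, 0 <= d x y) /\ (forall x y, d x y = 0 <-> x = y) /\
  (forall x y, d x y = d y x) /\ (forall x y z, d x z <= d x y + d y z).

Definition converges_to (D : X -> X -> R) (u : nat -> X) (x : X) : Prop :=
  is_lim_seq (fun n => D (u n) x) 0.

Definition is_cauchy (D : X -> X -> R) (u : nat -> X) : Prop :=
  forall e, 0 < e -> exists N, forall n m, (N <= n)%nat -> (N <= m)%nat -> D (u n) (u m) < e.

Definition proper (d : X -> X -> R) : Prop :=
  forall (x : X) (r : R) (s : nat -> X), (forall n, d x (s n) <= r) ->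
    exists (phi : nat -> nat) (y : X),
      (forall n, (phi n < phi (S n))%nat) /\ d x y <= r /\ converges_to d (fun n => s (phi n)) y.

Definition unbounded (d : X -> X -> R) : Prop :=
  forall M, exists x y, M < d x y.

Definition is_geodesic (d : X -> X -> R) (g : R -> X) (x y : X) : Prop :=
  g 0 = x /\ g (d x y) = y /\
  forall s t, 0 <= s <= d x y -> 0 <= t <= d x y -> d (g s) (g t) = Rabs (s - t).

Definition geodesic_space (d : X -> X -> R) : Prop :=
  forall x y, exists g, is_geodesic d g x y.

Definition gromov_product (d : X -> X -> R) (p x y : X) : R :=
  (d p x + d p y - d x y) / 2.

Definition gromov_hyperbolic (d : X -> X -> R) (delta : R) : Prop :=
  is_metric d /\ 0 <= delta /\ unbounded d /\ proper d /\ geodesic_space d /\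
  forall x y z p, gromov_product d p x z >=
     Rmin (gromov_product d p x y) (gromov_product d p y z) - delta.

(* partition a = t0 <= t1 <= ... <= tk = b, given as the list [t1;...;tk] *)
Fixpoint incr_from (t : R) (l : list R) : Prop :=
  match l with nil => True | t' :: l' => t <= t' /\ incr_from t' l' end.

Definition is_partition (a b : R) (l : list R) : Prop :=
  incr_from a l /\ last (a :: l) a = b.

Fixpoint var_sum (D : X -> X -> R) (g : R -> X) (t : R) (l : list R) : R :=
  match l with nil => 0 | t' :: l' => D (g t) (g t') + var_sum D g t' l' end.

Definition curve_length (D : X -> X -> R) (g : R -> X) (a b : R) : Rbar :=
  Lub_Rbar (fun v => exists l, is_partition a b l /\ v = var_sum D g a l).

Definition continuous_curve (d : X -> X -> R) (g : R -> X) (a b : R) : Prop :=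
  forall t, a <= t <= b -> forall e, 0 < e -> exists eta, 0 < eta /\
    forall s, a <= s <= b -> Rabs (s - t) < eta -> d (g s) (g t) < e.

Definition rectifiable (d : X -> X -> R) (g : R -> X) (a b : R) : Prop :=
  a <= b /\ continuous_curve d g a b /\ is_finite (curve_length d g a b).

Definition sup_on (rho : X -> R) (g : R -> X) (s t : R) : R :=
  real (Lub_Rbar (fun v => exists u, s <= u <= t /\ v = rho (g u))).

Fixpoint upper_sum (d : X -> X -> R) (rho : X -> R) (g : R -> X) (t : R) (l : list R) : R :=
  match l with
  | nil => 0
  | t' :: l' => sup_on rho g t t' * real (curve_length d g t t') + upper_sum d rho g t' l'
  end.

(* line integral  \int_g rho ds  for continuous rho >= 0 along a rectifiable curve,
   defined as the Riemann--Stieltjes integral of rho o g with respect to arc length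
   (infimum of upper Darboux--Stieltjes sums) *)
Definition line_integral (d : X -> X -> R) (rho : X -> R) (g : R -> X) (a b : R) : R :=
  real (Glb_Rbar (fun v => exists l, is_partition a b l /\ v = upper_sum d rho g a l)).

Definition uniformized (d : X -> X -> R) (p : X) (eps : R) (x y : X) : R :=
  real (Glb_Rbar (fun v => exists (g : R -> X) (a b : R),
     rectifiable d g a b /\ g a = x /\ g b = y /\
     v = line_integral d (fun z => exp (- eps * d p z)) g a b)).

Definition gromov_sequence (d : X -> X -> R) (p : X) (xs : nat -> X) : Prop :=
  forall M, exists N, forall n m, (N <= n)%nat -> (N <= m)%nat ->
    M <= gromov_product d p (xs n) (xs m).

(* ---------- metric boundary ----------
   The completion of (X,D) is realised as D-Cauchy sequences in X; the distance from
   y in X to the point represented by u is lim_k D y (u k).  Since X is dense in its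
   completion, the closure of X is the whole completion, so boundary points are the
   (classes of) Cauchy sequences not at distance 0 from any point of X. *)
Definition dist_to_completion_pt (D : X -> X -> R) (y : X) (u : nat -> X) : R :=
  real (Lim_seq (fun k => D y (u k))).

Definition metric_boundary_point (D : X -> X -> R) (u : nat -> X) : Prop :=
  is_cauchy D u /\ forall y : X, dist_to_completion_pt D y u <> 0.

Definition GH_bound (d : X -> X -> R) (p : X) (eps : R) (xs : nat -> X) : Prop :=
  exists C, 1 <= C /\ forall (n m : nat) (g : R -> X), is_geodesic d g (xs n) (xs m) ->
    Rbar_le (curve_length (uniformized d p eps) g 0 (d (xs n) (xs m)))
            (Finite (C * uniformized d p eps (xs n) (xs m))).

Definition GH_gromov_sequences (d : X -> X -> R) (p : X) (eps : R) : Prop :=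
  forall xs : nat -> X, gromov_sequence d p xs -> GH_bound d p eps xs.

Definition GH_metric_boundary (d : X -> X -> R) (p : X) (eps : R) : Prop :=
  forall u : nat -> X, metric_boundary_point (uniformized d p eps) u ->
  forall xs : nat -> X,
    is_lim_seq (fun n => dist_to_completion_pt (uniformized d p eps) (xs n) u) 0 ->
    GH_bound d p eps xs.

End Defs.

(* Main.v *)
Require Import Defs.
From Stdlib Require Import Reals Lra List ZArith.
From Coquelicot Require Import Coquelicot.
Open Scope R_scope.


Section Aux.
Context {X : Type}.

Lemma last_cons_d (l : list R) y d0 d1 : last (y :: l) d0 = last (y :: l) d1.
Proof. revert y. induction l as [|z l IH]; intros y; simpl; auto. apply IH. Qed.

Lemma lastc (l : list R) x d0 : last (x :: l) d0 = last l x.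
Proof. destruct l as [|y l]; simpl; auto. apply last_cons_d. Qed.

Lemma incr_last (l : list R) t : incr_from t l -> t <= last l t.
Proof. revert t; induction l as [|y l IH]; intros t H. simpl; lra.
  destruct H as [H1 H2]. rewrite lastc. specialize (IH _ H2). lra. Qed.

Lemma incr_app (l1 l2 : list R) t : incr_from t l1 -> incr_from (last l1 t) l2 -> incr_from t (l1 ++ l2).
Proof. revert t; induction l1 as [|y l IH]; intros t H1 H2. simpl in *; auto.
  destruct H1; split; auto. apply IH; auto. rewrite <- (lastc l y t). auto. Qed.

Lemma last_app (l1 l2 : list R) t : last (l1 ++ l2) t = last l2 (last l1 t).
Proof. revert t; induction l1 as [|y l IH]; intros t. simpl; auto.
  rewrite <- app_comm_cons, !lastc. apply IH. Qed.

Lemma var_sum_app (D : X -> X -> R) g (l1 l2 : list R) t :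
  var_sum D g t (l1 ++ l2) = var_sum D g t l1 + var_sum D g (last l1 t) l2.
Proof. revert t; induction l1 as [|y l IH]; intros t. simpl; ring.
  rewrite <- app_comm_cons, lastc. simpl. rewrite IH. ring. Qed.

Lemma upper_sum_app d rho (g : R -> X) (l1 l2 : list R) t :
  upper_sum d rho g t (l1 ++ l2) = upper_sum d rho g t l1 + upper_sum d rho g (last l1 t) l2.
Proof. revert t; induction l1 as [|y l IH]; intros t. simpl; ring.
  rewrite <- app_comm_cons, lastc. simpl. rewrite IH. ring. Qed.

Lemma glb_real (E : R -> Prop) v0 c : E v0 -> (forall v, E v -> c <= v) ->
  c <= real (Glb_Rbar E) /\ (forall v, E v -> real (Glb_Rbar E) <= v).
Proof. intros H0 Hc. destruct (Glb_Rbar_correct E) as [Hlb Hg].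
  assert (A : Rbar_le c (Glb_Rbar E)) by (apply Hg; intros x Hx; exact (Hc x Hx)).
  assert (B := Hlb _ H0).
  destruct (Glb_Rbar E) as [r| |]; simpl in *; tauto. Qed.

Lemma lub_real (E : R -> Prop) v0 c : E v0 -> (forall v, E v -> v <= c) ->
  real (Lub_Rbar E) <= c /\ (forall v, E v -> v <= real (Lub_Rbar E)).
Proof. intros H0 Hc. destruct (Lub_Rbar_correct E) as [Hub Hl].
  assert (A : Rbar_le (Lub_Rbar E) c) by (apply Hl; intros x Hx; exact (Hc x Hx)).
  assert (B := Hub _ H0).
  destruct (Lub_Rbar E) as [r| |]; simpl in *; tauto. Qed.

Lemma sup_on_bounds (rho : X -> R) g s t c : s <= t -> (forall u, s <= u <= t -> rho (g u) <= c) ->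
  rho (g s) <= sup_on rho g s t <= c.
Proof. intros Hst Hc. unfold sup_on.
  destruct (lub_real (fun v => exists u, s <= u <= t /\ v = rho (g u)) (rho (g s)) c) as [A B].
  exists s; split; [lra|auto]. intros v [u [Hu ->]]; auto.
  split; auto. apply B. exists s; split; [lra|auto]. Qed.

Lemma length_ge (D : X -> X -> R) g s t : (forall x y, 0 <= D x y) -> s <= t ->
  0 <= real (curve_length D g s t) /\
  (is_finite (curve_length D g s t) -> D (g s) (g t) <= real (curve_length D g s t)).
Proof. intros HD Hst. unfold curve_length.
  destruct (Lub_Rbar_correct (fun v => exists l, is_partition s t l /\ v = var_sum D g s l)) as [Hub _].
  assert (E : exists l, is_partition s t l /\ D (g s) (g t) = var_sum D g s l).
  { exists (t :: nil). split. split; simpl; auto. simpl; ring. }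
  specialize (Hub _ E). unfold is_finite.
  destruct (Lub_Rbar _) as [r| |]; simpl in *; try tauto.
  specialize (HD (g s) (g t)). split; intros; lra. split; intros; [lra|discriminate]. Qed.

End Aux.

Section Aux2.
Context {X : Type}.

Lemma sub_finite (d : X -> X -> R) g a b s t : (forall x y, 0 <= d x y) ->
  rectifiable d g a b -> a <= s -> s <= t -> t <= b -> is_finite (curve_length d g s t).
Proof. intros HD [_ [_ Hf]] Has Hst Htb. unfold curve_length in *.
  set (Eab := fun v => exists l, is_partition a b l /\ v = var_sum d g a l) in *.
  set (Est := fun v => exists l, is_partition s t l /\ v = var_sum d g s l).
  destruct (Lub_Rbar_correct Eab) as [Hub1 _].
  destruct (Lub_Rbar_correct Est) as [Hub2 Hl2].
  assert (E : Est (d (g s) (g t))).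
  { exists (t :: nil). split. split; simpl; auto. simpl; ring. }
  assert (A := Hub2 _ E).
  assert (B : Rbar_le (Lub_Rbar Est) (Lub_Rbar Eab)).
  { apply Hl2. intros v [l [[Hi Hlast] ->]].
    assert (HE : Eab (var_sum d g a (s :: l ++ b :: nil))).
    { exists (s :: l ++ b :: nil). split; auto. split.
      - split; auto. apply incr_app; auto. rewrite lastc in Hlast. rewrite Hlast. simpl. lra.
      - rewrite !lastc, last_app. simpl. reflexivity. }
    specialize (Hub1 _ HE). rewrite lastc in Hlast.
    replace (var_sum d g a (s :: l ++ b :: nil)) with
      (d (g a) (g s) + var_sum d g s l + d (g (last l s)) (g b) + 0) in Hub1.
    2:{ simpl. rewrite var_sum_app. simpl. ring. }
    destruct (Lub_Rbar Eab) as [r| |]; simpl in *; try tauto.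
    pose proof (HD (g a) (g s)). pose proof (HD (g (last l s)) (g b)). lra. }
  unfold is_finite in *. destruct (Lub_Rbar Eab); destruct (Lub_Rbar Est); simpl in *; try tauto; discriminate.
Qed.
End Aux2.

Lemma exp_le (x y : R) : x <= y -> exp x <= exp y.
Proof. intros H. destruct (Rle_lt_or_eq_dec _ _ H) as [H'|H']. left; apply exp_increasing; auto. rewrite H'; lra. Qed.

Lemma nat_above (r : R) : exists n : nat, r <= INR n.
Proof. destruct (archimed r) as [H1 _]. destruct (Z_le_gt_dec 0 (up r)) as [Hz|Hz].
  - exists (Z.to_nat (up r)). rewrite INR_IZR_INZ, Z2Nat.id; auto. lra.
  - exists O. simpl. apply Z.gt_lt in Hz. apply IZR_lt in Hz. lra. Qed.

Section Aux3.
Context {X : Type}.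

Definition Fe (eps r : R) := exp (- eps * r) / eps.

Lemma piece_lb (d : X -> X -> R) p eps g a b t t' : is_metric d -> 0 < eps ->
  rectifiable d g a b -> a <= t -> t <= t' -> t' <= b ->
  0 <= sup_on (fun z => exp (- eps * d p z)) g t t' * real (curve_length d g t t') /\
  Fe eps (d p (g t)) - Fe eps (d p (g t')) <=
     sup_on (fun z => exp (- eps * d p z)) g t t' * real (curve_length d g t t').
Proof. intros [Hnn [Hz [Hsym Htri]]] Heps Hrec Hat Htt Htb.
  destruct (sup_on_bounds (fun z => exp (- eps * d p z)) g t t' 1 Htt) as [S1 S2].
  { intros u _. rewrite <- exp_0. apply exp_le. pose proof (Hnn p (g u)). nra. }
  destruct (length_ge d g t t' Hnn Htt) as [L1 L2].
  specialize (L2 (sub_finite d g a b t t' Hnn Hrec Hat Htt Htb)).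
  set (S := sup_on _ g t t') in *. set (L := real _) in *. simpl in S1.
  pose proof (Htri p (g t) (g t')) as T.
  set (r := d p (g t)) in *. set (r' := d p (g t')) in *.
  pose proof (exp_pos (- eps * r)). 
  split. nra.
  unfold Fe. destruct (Rle_lt_dec r' r) as [Hr|Hr].
  - assert (exp (- eps * r) <= exp (- eps * r')) by (apply exp_le; nra).
    assert (0 <= S * L) by nra.
    apply Rle_trans with 0; [|auto]. unfold Rdiv. 
    assert (0 < / eps) by (apply Rinv_0_lt_compat; auto). nra.
  - assert (E : exp (- eps * r') = exp (- eps * r) * exp (- eps * (r' - r))).
    { rewrite <- exp_plus. f_equal. ring. }
    pose proof (exp_ineq1_le (- eps * (r' - r))).
    assert (exp (- eps * r) * (1 - eps * (r' - r)) <= exp (- eps * r')) by (rewrite E; nra).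
    assert (exp (- eps * r) * (r' - r) <= S * L) by nra.
    apply Rle_trans with (exp (- eps * r) * (r' - r)); auto.
    apply Rmult_le_reg_l with eps; auto. unfold Rdiv.
    replace (eps * ((exp (- eps * r) * / eps) - (exp (- eps * r') * / eps))) with
      (exp (- eps * r) - exp (- eps * r')) by (field; lra). nra.
Qed.

Lemma upper_lb (d : X -> X -> R) p eps g a b : is_metric d -> 0 < eps ->
  rectifiable d g a b -> forall l t, a <= t -> incr_from t l -> last l t <= b ->
  0 <= upper_sum d (fun z => exp (- eps * d p z)) g t l /\
  Fe eps (d p (g t)) - Fe eps (d p (g (last l t))) <= upper_sum d (fun z => exp (- eps * d p z)) g t l.
Proof. intros Hm He Hr l. induction l as [|y l IH]; intros t Ha Hi Hl.
  - simpl. lra.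
  - destruct Hi as [Hty Hi]. rewrite lastc in Hl |- *.
    pose proof (incr_last l y Hi).
    destruct (IH y ltac:(lra) Hi Hl) as [I1 I2].
    destruct (piece_lb d p eps g a b t y Hm He Hr Ha Hty ltac:(lra)) as [P1 P2].
    simpl. lra.
Qed.

Lemma line_lb (d : X -> X -> R) p eps g a b : is_metric d -> 0 < eps ->
  rectifiable d g a b ->
  0 <= line_integral d (fun z => exp (- eps * d p z)) g a b /\
  Fe eps (d p (g a)) - Fe eps (d p (g b)) <= line_integral d (fun z => exp (- eps * d p z)) g a b.
Proof. intros Hm He Hr. unfold line_integral.
  assert (Hab : a <= b) by (destruct Hr; auto).
  assert (HE : exists l, is_partition a b l /\ upper_sum d (fun z => exp (- eps * d p z)) g a (b :: nil)
     = upper_sum d (fun z => exp (- eps * d p z)) g a l).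
  { exists (b :: nil). split; auto. split; simpl; auto. }
  split.
  - apply (glb_real _ _ 0 HE). intros v [l [[Hi Hl] ->]]. rewrite lastc in Hl.
    apply (upper_lb d p eps g a b Hm He Hr l a); auto; lra.
  - apply (glb_real _ _ _ HE). intros v [l [[Hi Hl] ->]]. rewrite lastc in Hl.
    destruct (upper_lb d p eps g a b Hm He Hr l a) as [_ U]; auto; try lra.
    rewrite Hl in U; auto.
Qed.

End Aux3.

Section Aux4.
Context {X : Type}.

Lemma geo_var (d : X -> X -> R) g x y : is_geodesic d g x y ->
  forall l s, 0 <= s -> incr_from s l -> last l s <= d x y -> var_sum d g s l = last l s - s.
Proof. intros [_ [_ Hi]] l. induction l as [|z l IH]; intros s Hs Hinc Hl.
  - simpl; ring.
  - destruct Hinc as [H1 H2]. rewrite lastc in Hl |- *. pose proof (incr_last l z H2).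
    simpl. rewrite IH by (auto; lra). rewrite Hi by lra. rewrite Rabs_left1 by lra. ring.
Qed.

Lemma geo_len (d : X -> X -> R) g x y s t : is_geodesic d g x y -> 0 <= s -> s <= t -> t <= d x y ->
  curve_length d g s t = Finite (t - s).
Proof. intros Hg Hs Hst Ht. unfold curve_length. apply is_lub_Rbar_unique. split.
  - intros v [l [[Hi Hl] ->]]. rewrite lastc in Hl. rewrite (geo_var d g x y Hg l s); auto.
    rewrite Hl; simpl; lra. rewrite Hl; auto.
  - intros b Hb. apply Hb. exists (t :: nil). split. split; simpl; auto.
    rewrite (geo_var d g x y Hg); simpl; auto.
Qed.

Lemma geo_rect (d : X -> X -> R) g x y : is_metric d -> is_geodesic d g x y -> rectifiable d g 0 (d x y).
Proof. intros [Hnn _] Hg. pose proof (Hnn x y). split; [auto|split].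
  - intros t Ht e He. exists e. split; auto. intros s Hs Hst. destruct Hg as [_ [_ Hi]].
    rewrite Hi; auto.
  - rewrite (geo_len d g x y 0 (d x y)); [reflexivity|auto|lra|lra|lra].
Qed.

Lemma geo_piece (d : X -> X -> R) p eps g x y s t c : is_geodesic d g x y -> 0 < eps ->
  0 <= s -> s <= t -> t <= d x y -> t - s <= 1 -> (forall u, s <= u <= t -> c <= d p (g u)) ->
  sup_on (fun z => exp (- eps * d p z)) g s t * real (curve_length d g s t) <= exp (- eps * c).
Proof. intros Hg He Hs Hst Ht H1 Hc.
  rewrite (geo_len d g x y s t Hg Hs Hst Ht). simpl.
  destruct (sup_on_bounds (fun z => exp (- eps * d p z)) g s t (exp (- eps * c)) Hst) as [S1 S2].
  { intros u Hu. apply exp_le. specialize (Hc u Hu). nra. }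
  simpl in *. pose proof (exp_pos (- eps * d p (g s))). pose proof (exp_pos (- eps * c)). nra.
Qed.

Definition Sg (eps : R) := / (1 - exp (- eps)).

Lemma Sg_prop eps : 0 < eps -> 1 <= Sg eps /\ 1 + exp (- eps) * Sg eps <= Sg eps.
Proof. intros He. unfold Sg. assert (exp (- eps) < 1) by (rewrite <- exp_0; apply exp_increasing; lra).
  pose proof (exp_pos (- eps)). split.
  - rewrite <- Rinv_1. apply Rinv_le_contravar; lra.
  - apply Rmult_le_reg_l with (1 - exp (- eps)); [lra|].
    rewrite Rmult_plus_distr_l, <- Rmult_assoc, (Rmult_comm _ (exp _)), Rmult_assoc, Rinv_r by lra. lra.
Qed.

Lemma geo_right (d : X -> X -> R) p eps g x y : is_geodesic d g x y -> 0 < eps ->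
  forall n s t c, 0 <= s -> s <= t -> t <= d x y -> t - s <= INR n ->
  (forall u, s <= u <= t -> c + (u - s) <= d p (g u)) ->
  exists l, incr_from s l /\ last l s = t /\
    upper_sum d (fun z => exp (- eps * d p z)) g s l <= exp (- eps * c) * Sg eps.
Proof. intros Hg He n. destruct (Sg_prop eps He) as [Q1 Q2].
  induction n as [|n IH]; intros s t c Hs Hst Ht Hn Hc.
  - exists (t :: nil). split; [simpl; auto|split; [reflexivity|]]. simpl.
    assert (P := geo_piece d p eps g x y s t c Hg He Hs Hst Ht ltac:(simpl in Hn; lra)
      ltac:(intros u Hu; specialize (Hc u Hu); lra)).
    pose proof (exp_pos (- eps * c)). nra.
  - destruct (Rle_lt_dec (t - s) 1) as [H1|H1].
    + exists (t :: nil). split; [simpl; auto|split; [reflexivity|]]. simpl.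
      assert (P := geo_piece d p eps g x y s t c Hg He Hs Hst Ht H1
        ltac:(intros u Hu; specialize (Hc u Hu); lra)).
      pose proof (exp_pos (- eps * c)). nra.
    + rewrite S_INR in Hn.
      destruct (IH (s + 1) t (c + 1) ltac:(lra) ltac:(lra) Ht ltac:(lra)) as [l [Hi [Hl Hup]]].
      { intros u Hu. specialize (Hc u ltac:(lra)). lra. }
      exists ((s + 1) :: l). split; [split; auto; lra|split].
      { rewrite lastc; auto. }
      simpl.
      assert (P := geo_piece d p eps g x y s (s + 1) c Hg He Hs ltac:(lra) ltac:(lra) ltac:(lra)
        ltac:(intros u Hu; specialize (Hc u ltac:(lra)); lra)).
      replace (exp (- eps * (c + 1))) with (exp (- eps * c) * exp (- eps)) in Hup
        by (rewrite <- exp_plus; f_equal; ring).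
      pose proof (exp_pos (- eps * c)). nra.
Qed.

Lemma geo_left (d : X -> X -> R) p eps g x y : is_geodesic d g x y -> 0 < eps ->
  forall n s t c, 0 <= s -> s <= t -> t <= d x y -> t - s <= INR n ->
  (forall u, s <= u <= t -> c + (t - u) <= d p (g u)) ->
  exists l, incr_from s l /\ last l s = t /\
    upper_sum d (fun z => exp (- eps * d p z)) g s l <= exp (- eps * c) * Sg eps.
Proof. intros Hg He n. destruct (Sg_prop eps He) as [Q1 Q2].
  induction n as [|n IH]; intros s t c Hs Hst Ht Hn Hc.
  - exists (t :: nil). split; [simpl; auto|split; [reflexivity|]]. simpl.
    assert (P := geo_piece d p eps g x y s t c Hg He Hs Hst Ht ltac:(simpl in Hn; lra)
      ltac:(intros u Hu; specialize (Hc u Hu); lra)).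
    pose proof (exp_pos (- eps * c)). nra.
  - destruct (Rle_lt_dec (t - s) 1) as [H1|H1].
    + exists (t :: nil). split; [simpl; auto|split; [reflexivity|]]. simpl.
      assert (P := geo_piece d p eps g x y s t c Hg He Hs Hst Ht H1
        ltac:(intros u Hu; specialize (Hc u Hu); lra)).
      pose proof (exp_pos (- eps * c)). nra.
    + rewrite S_INR in Hn.
      destruct (IH s (t - 1) (c + 1) ltac:(lra) ltac:(lra) ltac:(lra) ltac:(lra)) as [l [Hi [Hl Hup]]].
      { intros u Hu. specialize (Hc u ltac:(lra)). lra. }
      exists (l ++ t :: nil). split; [apply incr_app; auto; rewrite Hl; simpl; split; auto; lra|split].
      { apply last_last. }
      rewrite upper_sum_app, Hl. simpl.
      assert (P := geo_piece d p eps g x y (t - 1) t c Hg He ltac:(lra) ltac:(lra) ltac:(lra) ltac:(lra)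
        ltac:(intros u Hu; specialize (Hc u ltac:(lra)); lra)).
      replace (exp (- eps * (c + 1))) with (exp (- eps * c) * exp (- eps)) in Hup
        by (rewrite <- exp_plus; f_equal; ring).
      pose proof (exp_pos (- eps * c)). nra.
Qed.

End Aux4.

Section Aux5.
Context {X : Type}.

Lemma unif_bounds (d : X -> X -> R) p eps : is_metric d -> geodesic_space d -> 0 < eps ->
  forall x y, 0 <= uniformized d p eps x y /\
    Fe eps (d p x) - Fe eps (d p y) <= uniformized d p eps x y /\
    uniformized d p eps x y <= 2 * Sg eps * exp (- eps * gromov_product d p x y).
Proof. intros Hm Hgeo He x y. destruct (Hgeo x y) as [g Hg].
  pose proof Hm as [Hnn [Hz [Hsym Htri]]].
  pose proof Hg as [Hg0 [HgL Hgi]].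
  set (L := d x y) in *. set (a := d p x). set (b := d p y).
  set (ts := (a - b + L) / 2).
  assert (Hr := geo_rect d g x y Hm Hg).
  assert (T1 := Htri p y x). assert (T2 := Htri p x y). assert (T3 := Hsym x y).
  assert (T4 := Hnn x y).
  assert (Hts0 : 0 <= ts) by (unfold ts, a, b, L in *; lra).
  assert (HtsL : ts <= L) by (unfold ts, a, b, L in *; lra).
  destruct (nat_above L) as [n Hn].
  destruct (geo_left d p eps g x y Hg He n 0 ts (gromov_product d p x y)) as [l1 [Hi1 [Hl1 Hu1]]];
    try (unfold L in *; lra).
  { intros u Hu. pose proof (Htri p (g u) x).
    assert (E : d (g u) (g 0) = Rabs (u - 0)) by (apply Hgi; unfold L in *; lra).
    rewrite Hg0, Rabs_right in E by lra. unfold gromov_product, ts, a, b, L in *. lra. }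
  destruct (geo_right d p eps g x y Hg He n ts L (gromov_product d p x y)) as [l2 [Hi2 [Hl2 Hu2]]];
    try (unfold L in *; lra).
  { intros u Hu. pose proof (Htri p (g u) y).
    assert (E : d (g u) (g L) = Rabs (u - L)) by (apply Hgi; unfold L in *; lra).
    rewrite HgL, Rabs_left1 in E by lra. unfold gromov_product, ts, a, b, L in *. lra. }
  set (rho := fun z => exp (- eps * d p z)) in *.
  assert (Hli : line_integral d rho g 0 L <= 2 * Sg eps * exp (- eps * gromov_product d p x y)).
  { unfold line_integral.
    assert (HE : exists l, is_partition 0 L l /\ upper_sum d rho g 0 (l1 ++ l2) = upper_sum d rho g 0 l).
    { exists (l1 ++ l2). split; auto. split.
      - apply incr_app; auto. rewrite Hl1; auto.
      - rewrite lastc, last_app, Hl1; auto. }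
    destruct (glb_real (fun v => exists l, is_partition 0 L l /\ v = upper_sum d rho g 0 l) _ 0 HE) as [_ G2].
    { intros v [l [[Hi Hl] ->]]. rewrite lastc in Hl.
      apply (upper_lb d p eps g 0 L Hm He Hr l 0); auto; lra. }
    apply Rle_trans with (upper_sum d rho g 0 (l1 ++ l2)). apply G2; auto.
    rewrite upper_sum_app, Hl1. lra. }
  assert (HE : exists (g0 : R -> X) (a0 b0 : R), rectifiable d g0 a0 b0 /\ g0 a0 = x /\ g0 b0 = y /\
     line_integral d rho g 0 L = line_integral d rho g0 a0 b0).
  { exists g, 0, L. auto. }
  unfold uniformized. fold rho.
  split; [|split].
  - apply (glb_real _ _ 0 HE). intros v [g0 [a0 [b0 [Hr0 [Ha0 [Hb0 ->]]]]]].
    apply (line_lb d p eps g0 a0 b0 Hm He Hr0).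
  - apply (glb_real _ _ _ HE). intros v [g0 [a0 [b0 [Hr0 [Ha0 [Hb0 ->]]]]]].
    unfold a, b; rewrite <- Ha0, <- Hb0. apply (line_lb d p eps g0 a0 b0 Hm He Hr0).
  - destruct (glb_real (fun v => exists (g0 : R -> X) (a0 b0 : R), rectifiable d g0 a0 b0 /\ g0 a0 = x /\ g0 b0 = y /\
     v = line_integral d rho g0 a0 b0) _ 0 HE) as [_ G2].
    { intros v [g0 [a0 [b0 [Hr0 [Ha0 [Hb0 ->]]]]]]. apply (line_lb d p eps g0 a0 b0 Hm He Hr0). }
    apply Rle_trans with (line_integral d rho g 0 L); auto.
Qed.

End Aux5.

Lemma exp_small (eps e : R) : 0 < eps -> 0 < e -> exists M, forall r, M <= r -> exp (- eps * r) < e.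
Proof. intros He Hee. exists (- ln (e / 2) / eps). intros r Hr.
  assert (H2 : 0 < e / 2) by lra.
  apply Rle_lt_trans with (exp (ln (e / 2))).
  - apply exp_le. apply Rmult_le_compat_l with (r := eps) in Hr; [|lra].
    replace (eps * (- ln (e / 2) / eps)) with (- ln (e / 2)) in Hr by (field; lra). lra.
  - rewrite exp_ln; lra.
Qed.

Theorem lemma3p1 (X : Type) (d : X -> X -> R) (delta : R) (p : X) (eps : R) :
  gromov_hyperbolic d delta -> 0 < eps ->
  GH_metric_boundary d p eps -> GH_gromov_sequences d p eps.
Proof.
  intros [Hm [_ [_ [_ [Hgeo _]]]]] He HGH xs Hgs.
  pose proof Hm as [Hnn [Hz [Hsym Htri]]].
  set (U := uniformized d p eps).
  set (K := 2 * Sg eps).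
  assert (HK : 0 < K) by (destruct (Sg_prop eps He); unfold K; lra).
  assert (UB := unif_bounds d p eps Hm Hgeo He).
  assert (Gp : forall x y, 0 <= gromov_product d p x y).
  { intros x y. unfold gromov_product. pose proof (Htri x p y). pose proof (Hsym x p). lra. }
  assert (Cau : forall e, 0 < e -> exists N, forall n m, (N <= n)%nat -> (N <= m)%nat ->
     0 <= U (xs n) (xs m) < e).
  { intros e Hee. destruct (exp_small eps (e / K) He) as [M HM].
    { apply Rdiv_lt_0_compat; lra. }
    destruct (Hgs M) as [N HN]. exists N. intros n m Hn Hm'.
    destruct (UB (xs n) (xs m)) as [B1 [_ B3]]. fold U in B1, B3. split; auto.
    specialize (HM _ (HN n m Hn Hm')).
    apply Rmult_lt_compat_l with (r := K) in HM; auto.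
    replace (K * (e / K)) with e in HM by (field; lra). fold K in B3. lra. }
  apply (HGH xs).
  - split.
    + intros e Hee. destruct (Cau e Hee) as [N HN]. exists N. intros n m Hn Hm'.
      apply HN; auto.
    + intros y. unfold dist_to_completion_pt. fold U.
      set (c0 := Fe eps (d p y)).
      assert (Hc0 : 0 < c0) by (unfold c0, Fe; apply Rdiv_lt_0_compat; auto; apply exp_pos).
      destruct (exp_small eps (eps * (c0 / 2)) He) as [M HM].
      { apply Rmult_lt_0_compat; lra. }
      destruct (Hgs M) as [N HN].
      assert (L1 : Rbar_le (Lim_seq (fun _ => c0 / 2)) (Lim_seq (fun k => U y (xs k)))).
      { apply Lim_seq_le_loc. exists N. intros k Hk.
        destruct (UB y (xs k)) as [_ [B2 _]]. fold U in B2. fold c0 in B2.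
        specialize (HN k k Hk Hk). unfold gromov_product in HN.
        rewrite (proj2 (Hz (xs k) (xs k)) eq_refl) in HN.
        specialize (HM (d p (xs k)) ltac:(lra)).
        unfold Fe in B2.
        assert (exp (- eps * d p (xs k)) / eps < c0 / 2).
        { apply Rmult_lt_reg_l with eps; auto. unfold Rdiv.
          replace (eps * (exp (- eps * d p (xs k)) * / eps)) with (exp (- eps * d p (xs k))) by (field; lra).
          lra. }
        lra. }
      assert (L2 : Rbar_le (Lim_seq (fun k => U y (xs k))) (Lim_seq (fun _ => K))).
      { apply Lim_seq_le_loc. exists O. intros k _.
        destruct (UB y (xs k)) as [_ [_ B3]]. fold U in B3. fold K in B3.
        assert (exp (- eps * gromov_product d p y (xs k)) <= 1).
        { rewrite <- exp_0. apply exp_le. pose proof (Gp y (xs k)). nra. }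
        nra. }
      rewrite !Lim_seq_const in L1, L2.
      destruct (Lim_seq (fun k => U y (xs k))); simpl in *; try tauto. lra.
  - apply is_lim_seq_spec. intros e. destruct (Cau (e / 2)) as [N HN].
    { destruct e; simpl; lra. }
    exists N. intros n Hn. unfold dist_to_completion_pt. fold U.
    assert (L1 : Rbar_le (Lim_seq (fun _ => 0)) (Lim_seq (fun k => U (xs n) (xs k)))).
    { apply Lim_seq_le_loc. exists N. intros k Hk. apply (HN n k); auto. }
    assert (L2 : Rbar_le (Lim_seq (fun k => U (xs n) (xs k))) (Lim_seq (fun _ => e / 2))).
    { apply Lim_seq_le_loc. exists N. intros k Hk. left. apply (HN n k); auto. }
    rewrite !Lim_seq_const in L1, L2.
    destruct e as [e Hep]. simpl in *.
    destruct (Lim_seq (fun k => U (xs n) (xs k))); simpl in *; try tauto.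
    rewrite Rminus_0_r, Rabs_right; lra.
Qed.
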